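(* Let $X_0=(y_0,U_0,H_0,r_0,V_0)\in\mathcal{F}_i^\alpha$ and let $X(t)$ be the $\alpha$-dissipative solution with initial data $X_0$. Let $c>0$ be such that $c\le y_{0,\xi}(\xi)+H_{0,\xi}(\xi)$ for a.e. $\xi\in\mathbb{R}$. Then for every $t\ge0$, $$\mathrm{m}\big(\{\xi\in\mathbb{R}:\tau(\xi)\le t\}\big)\le\frac{1+\frac14t^2}{c}\|H_0\|_\infty,$$ where $\mathrm{m}$ denotes Lebesgue measure.
   Context: Fix $\alpha\in W^{1,\infty}(\mathbb{R})$ with either $0\le\alpha(x)<1$ for all $x\in\mathbb{R}$, or $\alpha(x)=1$ for all $x\in\mathbb{R}$. $E_1=\{f\in L^\infty(\mathbb{R}): f'\in L^2(\mathbb{R}),\ \lim_{x\to-\infty}f(x)=0\}$, $E_2=\{f\in L^\infty(\mathbb{R}): f'\in L^2(\mathbb{R})\}$, normed by $\|f\|_\infty+\|f'\|_2$; $B=E_2\times E_2\times E_1\times L^2(\mathbb{R})\times E_1$. $\mathcal{F}^\alpha$ is the set of $X=(y,U,H,r,V)$ with $(y-\mathrm{id},U,H,r,V)\in B$ such that: (i) $y-\mathrm{id},U,H,V\in W^{1,\infty}$, $r\in L^\infty$; (ii) $y_\xi\ge0$, $H_\xi\ge0$ and $y_\xi+H_\xi>c'$ a.e. for some constant $c'>0$; (iii) $y_\xi V_\xi=U_\xi^2+r^2$ a.e.; (iv) $0\le V_\xi\le H_\xi$ a.e.; (v) if $0\le\alpha<1$, there is $\kappa:\mathbb{R}\to(0,1]$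 with $V_\xi=\kappa(y)H_\xi$ a.e. and $\kappa(y(\xi))=1$ whenever $U_\xi(\xi)<0$ or $r(\xi)\ne0$; (vi) if $\alpha\equiv1$, a.e. $y_\xi=0\Rightarrow V_\xi=0$ and $y_\xi>0\Rightarrow V_\xi=H_\xi$. $\mathcal{F}_i^\alpha=\{X\in\mathcal{F}^\alpha:V=H\}$. For $X_0\in\mathcal{F}_i^\alpha$ the breaking time is $\tau(\xi)=0$ if $y_{0,\xi}(\xi)=0$, $\tau(\xi)=-2U_{0,\xi}(\xi)/H_{0,\xi}(\xi)$ if $r_0(\xi)=0$ and $U_{0,\xi}(\xi)<0$, and $\tau(\xi)=\infty$ otherwise. The $\alpha$-dissipative solution with data $X_0$ is the unique $X(t)=(y,U,H,r,V)(t)$, $X(0)=X_0$, solving $y_t=U$, $U_t=\frac12V-\frac14\lim_{\xi\to\infty}V$, $H_t=0$, $r_t=0$, with $V(\xi,t)=\int_{-\infty}^\xi H_{0,\xi}(\eta)(1-\mathbf{1}_{\{t\ge\tau(\eta)\}}\alpha(y(\eta,\tau(\eta))))d\eta$. *)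

(* Defs.v *)
From HB Require Import structures.
From mathcomp Require Import all_boot all_order all_algebra.
From mathcomp Require Import all_classical all_reals all_analysis.
Set Implicit Arguments. Unset Strict Implicit. Unset Printing Implicit Defensive.
Import Order.TTheory GRing.Theory Num.Theory.
Import numFieldNormedType.Exports.
Local Open Scope classical_set_scope.
Local Open Scope ring_scope.

Section Spaces.
Variable R : realType.
Local Notation mu := (@lebesgue_measure R).

Definition Linf (g : R -> R) : Prop :=
  measurable_fun setT g /\ exists M : R, {ae mu, forall x, `|g x| <= M}.

Definition L2 (g : R -> R) : Prop :=
  measurable_fun setT g /\ (\int[mu]_x ((g x) ^+ 2)%:E < +oo)%E.

(* g is a weak (a.e.) derivative of f: f is locally absolutely continuous
   and f(b) - f(a) = int_a^b g for all a <= b *)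
Definition weak_deriv (f g : R -> R) : Prop :=
  forall a b : R, a <= b ->
    mu.-integrable `[a, b] (EFin \o g) /\
    ((f b - f a)%:E = \int[mu]_(x in `[a, b]) (g x)%:E)%E.

Definition W1inf (f g : R -> R) : Prop :=
  Linf f /\ Linf g /\ weak_deriv f g.

Definition E2 (f g : R -> R) : Prop :=
  Linf f /\ weak_deriv f g /\ L2 g.

Definition E1 (f g : R -> R) : Prop :=
  E2 f g /\ f x @[x --> -oo] --> (0 : R).

(* X = (y, U, H, r, V) in F^alpha; yx, Ux, Hx, Vx are (representatives of)
   the a.e. derivatives y_xi, U_xi, H_xi, V_xi. *)
Definition in_F (alpha : R -> R) (y U H r V yx Ux Hx Vx : R -> R) : Prop :=
  [/\ E2 (fun x => y x - x) (fun x => yx x - 1), E2 U Ux, E1 H Hx, L2 r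
    & E1 V Vx] /\
  [/\ W1inf (fun x => y x - x) (fun x => yx x - 1), W1inf U Ux, W1inf H Hx,
      W1inf V Vx & Linf r] /\
  [/\ {ae mu, forall x, 0 <= yx x}, {ae mu, forall x, 0 <= Hx x}
    & exists c' : R, 0 < c' /\ {ae mu, forall x, c' < yx x + Hx x}] /\
  {ae mu, forall x, yx x * Vx x = Ux x ^+ 2 + r x ^+ 2} /\
  {ae mu, forall x, 0 <= Vx x <= Hx x} /\
  ((forall x, 0 <= alpha x < 1) ->
     exists kappa : R -> R, (forall z, 0 < kappa z <= 1) /\
       {ae mu, forall x, Vx x = kappa (y x) * Hx x} /\
       {ae mu, forall x, (Ux x < 0 \/ r x != 0) -> kappa (y x) = 1}) /\
  ((forall x, alpha x = 1) ->
     {ae mu, forall x, yx x = 0 -> Vx x = 0} /\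
     {ae mu, forall x, 0 < yx x -> Vx x = Hx x}).

Definition in_Fi (alpha : R -> R) (y U H r yx Ux Hx : R -> R) : Prop :=
  in_F alpha y U H r H yx Ux Hx Hx.

Definition tau (yx Ux Hx r : R -> R) (xi : R) : \bar R :=
  if yx xi == 0 then 0%E
  else if (r xi == 0) && (Ux xi < 0) then (- 2 * Ux xi / Hx xi)%:E
  else +oo%E.

End Spaces.

(* Main.v *)
Require Import Defs.
From HB Require Import structures.
From mathcomp Require Import all_boot all_order all_algebra.
From mathcomp Require Import all_classical all_reals all_analysis.
From mathcomp Require Import lra measurable_realfun ess_sup_inf hoelder.
Import Order.TTheory GRing.Theory Num.Theory.
Import numFieldNormedType.Exports.
Local Open Scope classical_set_scope.
Local Open Scope ring_scope.

Lemma pt_bound (R : realType) (yx u h r c t : R) : 0 < c -> 0 <= t ->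
  c <= yx + h -> 0 <= yx -> 0 <= h -> yx * h = u ^+ 2 + r ^+ 2 ->
  (tau (fun _ => yx) (fun _ => u) (fun _ => h) (fun _ => r) 0 <= t%:E)%E ->
  1 <= (1 + t ^+ 2 / 4) / c * Num.max h 0.
Proof.
move=> c0 t0 cyh y0 h0 eq; rewrite /tau /= max_l //.
set K := (1 + t ^+ 2 / 4) / c.
have Kc : K * c = 1 + t ^+ 2 / 4 by rewrite /K divfK // gt_eqF.
have t2 : 0 <= t ^+ 2 / 4 by rewrite divr_ge0 // sqr_ge0.
have K0 : 0 <= K by apply: divr_ge0; [rewrite addr_ge0 | exact: ltW].
case: eqP => [yx0 _|yxn0].
  rewrite yx0 add0r in cyh. nra.
case: ifP => [/andP[/eqP r0 u0]|_]; last by rewrite leye_eq.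
rewrite lee_fin => ht.
have [h00|hpos] := eqVneq h 0.
  move: eq; rewrite h00 mulr0 r0 expr0n /= addr0 => /esym /eqP.
  by rewrite sqrf_eq0 => /eqP u00; move: u0; rewrite u00 ltxx.
have hp : 0 < h by rewrite lt_def hpos h0.
move: ht; rewrite ler_pdivrMr // => ht.
have h4 : 4 * u ^+ 2 <= t ^+ 2 * h ^+ 2 by nra.
have hy : 4 * yx <= t ^+ 2 * h.
  have : 4 * yx * h <= t ^+ 2 * h * h by rewrite -mulrA eq r0 expr0n /= addr0 -mulrA -expr2.
  by rewrite ler_pM2r.
have : c <= K * c * h.
  rewrite Kc; apply: (le_trans cyh).
  have -> : (1 + t ^+ 2 / 4) * h = h + t ^+ 2 * h / 4 by rewrite mulrDl mul1r mulrAC.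
  rewrite addrC lerD2l ler_pdivlMr //; first by rewrite mulrC.
nra.
Qed.

Section An.
Variable R : realType.
Local Notation mu := (@lebesgue_measure R).

Lemma int_g (H Hx : R -> R) (a b : R) : weak_deriv H Hx ->
  measurable_fun setT Hx -> {ae mu, forall x, 0 <= Hx x} -> a <= b ->
  (\int[mu]_(x in `[a, b]) (Num.max (Hx x) 0)%:E = (H b - H a)%:E)%E.
Proof.
move=> wd mH ae ab; have [_ ->] := wd a b ab.
apply: ae_eq_integral => //.
- apply/measurable_EFinP.
  exact: (measurable_funS measurableT (@subsetT _ _) (measurable_maxr mH (measurable_cst (0:R)))).
- by apply/measurable_EFinP; apply: measurable_funS mH.
- by apply: (@filterS _ _ (ae_filter_ringOfSetsType mu) _ _ _ ae) => x hx _ /=; rewrite max_l.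
Qed.

Lemma mono_H (H Hx : R -> R) : weak_deriv H Hx ->
  measurable_fun setT Hx -> {ae mu, forall x, 0 <= Hx x} ->
  forall a b, a <= b -> H a <= H b.
Proof.
move=> wd mH ae a b ab; rewrite -subr_ge0 -lee_fin -(@int_g H Hx a b wd mH ae ab).
by apply: integral_ge0 => x _; rewrite lee_fin le_max lexx orbT.
Qed.

Lemma H_ge0 (H : R -> R) : (H z @[z --> -oo] --> (0:R)) ->
  (forall a b, a <= b -> H a <= H b) -> forall x, 0 <= H x.
Proof.
move=> HL mono x; rewrite -(cvg_lim _ HL) //.
apply: limr_le; first exact: (cvgP _ HL).
apply: filterS (nbhs_ninfty_le (num_real x)) => z; exact: mono.
Qed.

End An.

Section An2.
Variable R : realType.
Local Notation mu := (@lebesgue_measure R).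

Lemma muT_gt0 : (0 < mu [set: R])%E.
Proof. by rewrite -set_itvNyy lebesgue_measure_itv /= ltry. Qed.

Lemma H_le_N (H : R -> R) : (forall a b, a <= b -> H a <= H b) ->
  (forall x, 0 <= H x) ->
  forall x, ((H x)%:E <= 'N[mu]_(+oo)[EFin \o H])%E.
Proof.
move=> mono H0 x.
have -> : ('N[mu]_(+oo)[EFin \o H] = ess_sup mu (abse \o (EFin \o H)))%E.
  by rewrite unlock /= muT_gt0.
rewrite leNgt; apply/negP => hlt.
have [M [mM muM sub]] := @ess_sup_ge _ _ _ mu (abse \o (EFin \o H)).
have sub2 : `[x, +oo[ `<=` M.
  move=> z; rewrite /= in_itv /= andbT => xz; apply: sub => /= hz.
  have : ((H x)%:E <= `|(H z)%:E|)%E by rewrite /= lee_fin ger0_norm ?H0 // mono.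
  by move=> /(lt_le_trans hlt) /lt_le_trans /(_ hz); rewrite ltxx.
have m1 : measurable (`[x, +oo[%classic : set R) by exact: measurable_itv.
have := le_measure mu (mem_set m1) (mem_set mM) sub2.
move=> h; have : (mu `[x, +oo[ <= 0)%E.
  by apply: (le_trans h); rewrite le_eqVlt; apply/orP; left; apply/eqP; exact: muM.
by rewrite lebesgue_measure_itv /= ltry.
Qed.
End An2.

Lemma tau_le_iff (R : realType) (yx u h r t : R) : 0 <= t ->
  (tau (fun _ => yx) (fun _ => u) (fun _ => h) (fun _ => r) 0 <= t%:E)%E =
  (yx == 0) || ((r == 0) && (u < 0) && ((h == 0) ||
     ((0 < h) && (- 2 * u <= t * h)) || ((h < 0) && (t * h <= - 2 * u)))).
Proof.
move=> t0; rewrite /tau /=; case: eqP => [_|_] /=; first by rewrite lee_fin.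
case: ifP => _ /=; last by rewrite leNgt ltey.
rewrite lee_fin; case: (ltgtP h 0) => hc /=.
- by rewrite ler_ndivrMr.
- by rewrite ler_pdivrMr // orbF.
- by rewrite hc invr0 mulr0 t0.
Qed.

Section Meas.
Variable R : realType.
Local Notation mu := (@lebesgue_measure R).

Let mtrue : measurable [set true]. Proof. by []. Qed.

Lemma mset_le (f g : R -> R) : measurable_fun setT f -> measurable_fun setT g ->
  measurable [set x | f x <= g x].
Proof.
move=> mf mg; have := measurable_fun_ler mf mg measurableT (mtrue).
by rewrite setTI.
Qed.

Lemma mset_lt (f g : R -> R) : measurable_fun setT f -> measurable_fun setT g ->
  measurable [set x | f x < g x].
Proof.
move=> mf mg; have := measurable_fun_ltr mf mg measurableT (mtrue).
by rewrite setTI.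
Qed.

Lemma mset_eq (f g : R -> R) : measurable_fun setT f -> measurable_fun setT g ->
  measurable [set x | f x == g x].
Proof.
move=> mf mg; have := measurable_fun_eqr mf mg measurableT (mtrue).
by rewrite setTI.
Qed.

Lemma mset_or (a b : R -> bool) : measurable [set x | a x] -> measurable [set x | b x] ->
  measurable [set x | a x || b x].
Proof.
move=> ma mb; rewrite (_ : [set x | a x || b x] = [set x | a x] `|` [set x | b x]).
  exact: measurableU.
by apply/seteqP; split => x /=; [move/orP | move=> [] ->; rewrite ?orbT].
Qed.

Lemma mset_and (a b : R -> bool) : measurable [set x | a x] -> measurable [set x | b x] ->
  measurable [set x | a x && b x].
Proof.
move=> ma mb; rewrite (_ : [set x | a x && b x] = [set x | a x] `&` [set x | b x]).
  exact: measurableI.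
by apply/seteqP; split => x /=; [move/andP | move=> [-> ->]].
Qed.

End Meas.

Theorem corollary2p4 (R : realType) (alpha alphax : R -> R)
    (y0 U0 H0 r0 y0x U0x H0x : R -> R) (c t : R) :
  W1inf alpha alphax ->
  ((forall x, 0 <= alpha x < 1) \/ (forall x, alpha x = 1)) ->
  in_Fi alpha y0 U0 H0 r0 y0x U0x H0x ->
  0 < c ->
  {ae (@lebesgue_measure R), forall xi, c <= y0x xi + H0x xi} ->
  0 <= t ->
  (@lebesgue_measure R [set xi | (tau y0x U0x H0x r0 xi <= t%:E)%E]
     <= ((1 + t ^+ 2 / 4) / c)%:E
        * 'N[@lebesgue_measure R]_(+oo%E)[EFin \o H0])%E.
Proof.
move=> _ _ [[E2y E2U [[_ [wdH [mHx _]]] HL] [mr _] _] [_ [[aey aeH _] [aeiii _]]]] c0 aec t0.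
set mu := @lebesgue_measure R.
have my : measurable_fun setT y0x.
  case: E2y => _ [_ [m _]].
  rewrite (_ : y0x = (fun x => (y0x x - 1) + 1)); last by apply/funext => x; rewrite subrK.
  exact: measurable_funD.
have mU : measurable_fun setT U0x by case: E2U => _ [_ [m _]].
set K := (1 + t ^+ 2 / 4) / c.
have K0 : 0 <= K.
  by apply: divr_ge0; [rewrite addr_ge0 // divr_ge0 // sqr_ge0 | exact: ltW].
set N := ('N[mu]_(+oo%E)[EFin \o H0])%E.
set S := [set xi | (tau y0x U0x H0x r0 xi <= t%:E)%E].
have mono := @mono_H R _ _ wdH mHx aeH.
have Hge0 := @H_ge0 R _ HL mono.
have HN := @H_le_N R _ mono Hge0.
have mS : measurable S.
  rewrite (_ : S = [set xi | (y0x xi == 0) || ((r0 xi == 0) && (U0x xi < 0) && ((H0x xi == 0) ||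
     ((0 < H0x xi) && (- 2 * U0x xi <= t * H0x xi)) || ((H0x xi < 0) && (t * H0x xi <= - 2 * U0x xi))))]).
    have mc (k : R) : measurable_fun setT (fun _ : R => k) by exact: measurable_cst.
    have m2U : measurable_fun setT (fun x => - 2 * U0x x) by exact: measurable_funM.
    have mtH : measurable_fun setT (fun x => t * H0x x) by exact: measurable_funM.
    apply: mset_or; first by apply: mset_eq.
    apply: mset_and; first by apply: mset_and; [apply: mset_eq | apply: mset_lt].
    apply: mset_or; first apply: mset_or.
    - by apply: mset_eq.
    - by apply: mset_and; [apply: mset_lt | apply: mset_le].
    - by apply: mset_and; [apply: mset_lt | apply: mset_le].
  apply/seteqP; split => x /=; have E := @tau_le_iff R (y0x x) (U0x x) (H0x x) (r0 x) t t0;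
    by rewrite /tau /= in E; rewrite /S /tau /= E.
set F := fun n : nat => S `&` `[- (n%:R : R), n%:R]%classic.
have mF n : measurable (F n) by apply: measurableI => //; exact: measurable_itv.
have mg : measurable_fun setT (fun x => Num.max (H0x x) 0).
  exact: (measurable_maxr mHx (measurable_cst (0:R))).
have aeall : {ae mu, forall x, (c <= y0x x + H0x x) /\ (0 <= y0x x) /\ (0 <= H0x x) /\
    (y0x x * H0x x = U0x x ^+ 2 + r0 x ^+ 2)}.
  apply: (@filterS3 _ _ (ae_filter_ringOfSetsType mu) _ _ _ _ _ aec aey
    (@filterS2 _ _ (ae_filter_ringOfSetsType mu) _ _
       (fun x => 0 <= H0x x /\ y0x x * H0x x = U0x x ^+ 2 + r0 x ^+ 2)
       (fun x h1 h2 => conj h1 h2) aeH aeiii)).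
  by move=> x h1 h2 [h3 h4].
have bnd n : (mu (F n) <= K%:E * N)%E.
  rewrite -[mu (F n)]mul1e -integral_cst; last exact: mF.
  apply: (@le_trans _ _ (\int[mu]_(x in F n) (K * Num.max (H0x x) 0)%:E)%E).
    apply: ae_ge0_le_integral => //.
    - exact: mF.
    - by move=> x _; rewrite lee_fin mulr_ge0 // le_max lexx orbT.
    - by apply/measurable_EFinP; exact: (measurable_funS measurableT (@subsetT _ _) (measurable_funM (measurable_cst K) mg)).
    - apply: (@filterS _ _ (ae_filter_ringOfSetsType mu) _ _ _ aeall).
      move=> x [h1 [h2 [h3 h4]]] [Sx _] /=; rewrite lee_fin.
      exact: (@pt_bound R (y0x x) (U0x x) (H0x x) (r0 x) c t c0 t0 h1 h2 h3 h4 Sx).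
  under eq_integral do rewrite EFinM.
  rewrite ge0_integralZl_EFin //; try exact: mF;
    try (by move=> x _; rewrite lee_fin le_max lexx orbT);
    try (by apply/measurable_EFinP; exact: (measurable_funS measurableT (@subsetT _ _) mg)).
  apply: lee_wpmul2l; first by rewrite lee_fin.
  have nn : - (n%:R : R) <= n%:R by have := ler0n R n; lra.
  have sub : F n `<=` `[- (n%:R : R), n%:R] by move=> x [].
  have mgE : measurable_fun (`[- (n%:R : R), n%:R]%classic : set R) (fun x => (Num.max (H0x x) 0)%:E).
    by apply/measurable_EFinP; exact: (measurable_funS measurableT (@subsetT _ _) mg).
  have g0 : forall x, (`[- (n%:R : R), n%:R]%classic : set R) x -> (0 <= (Num.max (H0x x) 0)%:E)%E.
    by move=> x _; rewrite lee_fin le_max lexx orbT.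
  have hs := @ge0_subset_integral _ _ _ (@lebesgue_measure R) _ _ (mF n) (measurable_itv `[- (n%:R : R), n%:R]) _ mgE g0 sub.
  apply: (le_trans hs).
  rewrite (@int_g R H0 H0x _ _ wdH mHx aeH nn).
  apply: le_trans (HN n%:R); rewrite lee_fin lerBlDr lerDl; exact: Hge0.
have bigF : \bigcup_n F n = S.
  apply/seteqP; split => x; first by move=> [n _ []].
  move=> Sx; exists (Num.truncn `|x|).+1 => //; split => //.
  rewrite /= in_itv /= -ler_norml; apply: ltW; exact: truncnS_gt.
have ndF : nondecreasing_seq F.
  move=> n m nm; apply/subsetPset => x [Sx]; rewrite /= !in_itv /= => /andP[a b].
  have nm' : (n%:R : R) <= m%:R by rewrite ler_nat.
  split => //; rewrite /= in_itv /=; apply/andP; split; lra.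
have cv := @nondecreasing_cvg_mu _ _ _ (@lebesgue_measure R) F mF (bigcup_measurable (fun n _ => mF n)) ndF.
rewrite bigF in cv.
have h : (lim ((@lebesgue_measure R \o F) n @[n --> \oo]) <= K%:E * N)%E.
  apply: lime_le; first exact: (cvgP _ cv).
  by apply: nearW => n; exact: bnd.
by rewrite (cvg_lim _ cv) in h.
Qed.
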